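(* For every model $M$ of a frame-logic signature there is a unique frame model over the same universes with the same interpretation of the constants, the function symbols, and the non-inductive relations (those in $\mathcal R$).
   Context: Frame logic (FL). Fix a multi-sorted signature with a finite set $S$ of sorts containing a designated foreground sort $\sigma_{\mathsf f}$ and a background sort $\sigma_{\mathsf{S(f)}}$, constants $C$, function symbols $F$, and disjoint sets of relation symbols $\mathcal R$ (ordinary) and $\mathcal I$ (inductively defined). The universe of $\sigma_{\mathsf{S(f)}}$ is the powerset of the universe of $\sigma_{\mathsf f}$; the only symbols involving $\sigma_{\mathsf{S(f)}}$ are $\in,\cup,\cap$, complement, $\emptyset$ with standard meanings. A subset $F_{\mathsf m}\subseteq F$ is declared mutable, each having an argument of sort $\sigma_{\mathsf f}$. Syntax. Guards: $\gamma ::= t=t \mid R(\bar t)\ (R\in\mathcal R) \mid \gamma\wedge\gamma\mid\neg\gamma\mid \mathit{ite}(\gamma:\gamma,\gamma)\mid \exists y:\gamma.\,\gamma$, with no terms of sort $\sigma_{\mathsf{S(f)}}$. Formulas: $\varphi ::= t=t\mid R(\bar t)\ (R\in\mathcal R\cup\mathcal I)\mid \varphi\wedge\varphi\mid\neg\varphi\mid\mathit{ite}(\gamma:\varphi,\varphi)\mid\exists y:\gamma.\,\varphi$. Terms: $t::= c\mid x\mid f(t_1,\dots,t_m)\mid \mathit{ite}(\gamma:t,t)\mid \mathit{Sp}(\varphi)\mid\mathit{Sp}(t)$ (support expressions, of sort $\sigma_{\mathsf{S(f)}}$). Each $R\in\mathcal I$ has a definition $R(\bar x):=\rho_R(\bar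 x)$ with no argument of sort $\sigma_{\mathsf{S(f)}}$, where relations of $\mathcal I$ occur in $\rho_R$ only under an even number of negations or inside support expressions. Models: a model gives universes, interprets constants, functions, relations in $\mathcal R\cup\mathcal I$, and maps each support expression to a function from variable assignments to sets of foreground elements; $\mathit{ite}(\gamma:\alpha,\beta)$ means $(\gamma\wedge\alpha)\vee(\neg\gamma\wedge\beta)$ and $\exists y:\gamma.\varphi$ means $\exists y.(\gamma\wedge\varphi)$. Support equations: $\mathit{Sp}(c)=\mathit{Sp}(x)=\emptyset$; $[\![\mathit{Sp}(f(t_1..t_n))]\!](\nu)=\bigcup_{i:\,t_i\text{ of sort }\sigma_{\mathsf f}}\{[\![t_i]\!]_{M,\nu}\}\cup\bigcup_i[\![\mathit{Sp}(t_i)]\!](\nu)$ if $f\in F_{\mathsf m}$, else $\bigcup_i[\![\mathit{Sp}(t_i)]\!](\nu)$; $\mathit{Sp}(\mathit{Sp}(\cdot))=\mathit{Sp}(\cdot)$; $\mathit{Sp}(t_1=t_2)=\mathit{Sp}(t_1)\cup\mathit{Sp}(t_2)$; $\mathit{Sp}(R(\bar t))=\bigcup_i\mathit{Sp}(t_i)$ for $R\in\mathcal R$; for $R\in\mathcal I$, $[\![\mathit{Sp}(R(\bar t))]\!](\nu)=[\![\mathit{Sp}(\rho_R(\bar x))]\!](\nu[\bar x\leftarrow[\![\bar t]\!]_{M,\nu}])\cup\bigcup_i[\![\mathit{Sp}(t_i)]\!](\nu)$; $\mathit{Sp}(\alpha\wedge\beta)=\mathit{Sp}(\alpha)\cup\mathit{Sp}(\beta)$;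 $\mathit{Sp}(\neg\varphi)=\mathit{Sp}(\varphi)$; $\mathit{Sp}(\mathit{ite}(\gamma:\alpha,\beta))$ is $\mathit{Sp}(\gamma)\cup\mathit{Sp}(\alpha)$ where $\gamma$ holds and $\mathit{Sp}(\gamma)\cup\mathit{Sp}(\beta)$ otherwise (likewise for term $\mathit{ite}$); $[\![\mathit{Sp}(\exists y:\gamma.\varphi)]\!](\nu)=\bigcup_{u}[\![\mathit{Sp}(\gamma)]\!](\nu[y\leftarrow u])\cup\bigcup_{u:\,M,\nu[y\leftarrow u]\models\gamma}[\![\mathit{Sp}(\varphi)]\!](\nu[y\leftarrow u])$. Inductive equations: $[\![R(\bar x)]\!]=[\![\rho_R(\bar x)]\!]$ for $R\in\mathcal I$. Frame model: a model $M$ that satisfies the support and inductive equations such that (1) no model with the same universes, constants, functions and $\mathcal R$-relations whose support interpretations are pointwise contained in those of $M$ with at least one strict containment satisfies the support equations, and (2) no model with the same universes, constants, functions, $\mathcal R$-relations and support interpretations whose inductive relations are contained in those of $M$ with at least one strictly smaller satisfies the inductive equations. *)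

(* Defs.v *)
From mathcomp Require Import all_boot.
From Stdlib Require Import ClassicalDescription.

Set Implicit Arguments.
Unset Strict Implicit.
Unset Printing Implicit Defensive.

(* Signatures.  [bsort] is the finite set of all sorts OTHER than the
   background sort sigma_S(f); it contains the foreground sort [fg].
   The full set of sorts is [option bsort], with [None] = sigma_S(f).
   Constants, function symbols and relation symbols (ordinary and
   inductive) only involve sorts of [bsort]; the symbols involving
   sigma_S(f) (membership, union, intersection, complement, emptyset)
   are built into the syntax below.                                    *)
Record signature := Signature {
  bsort : finType;
  fg : bsort;
  Csym : Type;
  csort : Csym -> bsort;
  Fsym : Type;
  fargs : Fsym -> seq bsort;
  fres : Fsym -> bsort;
  fmut : Fsym -> Prop;
  fmut_fg : forall f, fmut f -> fg \in fargs f;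
  Rsym : Type;
  rargs : Rsym -> seq bsort;
  Isym : Type;
  iargs : Isym -> seq bsort
}.

Section FL.
Variable S : signature.

Notation sort := (option (bsort S)).
Notation nthS ss i := (nth (fg S) ss i).

(* The boolean index [g] is [true] for guards and [false] for
   general terms / formulas.  Guards cannot contain terms of sort
   sigma_S(f) (hence no support expressions, no membership, no set
   operations, no set variables) nor inductive relations.             *)
Inductive term : bool -> sort -> Type :=
| TVar g (b : bsort S) (n : nat) : term g (Some b)
| TSVar (n : nat) : term false None
| TConst g (c : Csym S) : term g (Some (csort c))
| TApp g (f : Fsym S)
    (ts : forall i : 'I_(size (fargs f)), term g (Some (nthS (fargs f) i)))
    : term g (Some (fres f))
| TIte g s (gam : formula true) (t1 t2 : term g s) : term g s
| TSpF (phi : formula false) : term false None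
| TSpT s (t : term false s) : term false None
| TEmpty : term false None
| TUnion (A B : term false None) : term false None
| TInter (A B : term false None) : term false None
| TCompl (A : term false None) : term false None
with formula : bool -> Type :=
| FEq g s (t1 t2 : term g s) : formula g
| FRel g (r : Rsym S)
    (ts : forall i : 'I_(size (rargs r)), term g (Some (nthS (rargs r) i)))
    : formula g
| FRelI (r : Isym S)
    (ts : forall i : 'I_(size (iargs r)), term false (Some (nthS (iargs r) i)))
    : formula false
| FMem (t : term false (Some (fg S))) (A : term false None) : formula false
| FAnd g (phi psi : formula g) : formula g
| FNot g (phi : formula g) : formula g
| FIte g (gam : formula true) (phi psi : formula g) : formula g
| FEx g (s : sort) (n : nat) (gam : formula true) (phi : formula g) : formula g.

Fixpoint relaxT g s (t : term g s) : term false s :=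
  match t in term _ s return term false s with
  | TVar _ b n => @TVar false b n
  | TSVar n => TSVar n
  | TConst _ c => @TConst false c
  | TApp _ f ts => @TApp false f (fun i => relaxT (ts i))
  | TIte _ _ gam t1 t2 => @TIte false _ gam (relaxT t1) (relaxT t2)
  | TSpF phi => TSpF phi
  | TSpT _ t => TSpT t
  | TEmpty => TEmpty
  | TUnion A B => TUnion A B
  | TInter A B => TInter A B
  | TCompl A => TCompl A
  end
with relaxF g (phi : formula g) : formula false :=
  match phi with
  | FEq _ _ t1 t2 => @FEq false _ (relaxT t1) (relaxT t2)
  | FRel _ r ts => @FRel false r (fun i => relaxT (ts i))
  | FRelI r ts => FRelI ts
  | FMem t A => FMem t A
  | FAnd _ a b => @FAnd false (relaxF a) (relaxF b)
  | FNot _ a => @FNot false (relaxF a)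
  | FIte _ gam a b => @FIte false gam (relaxF a) (relaxF b)
  | FEx _ s n gam a => @FEx false s n gam (relaxF a)
  end.

Fixpoint occT g s0 (t : term g s0) (s : sort) (n : nat) : Prop :=
  match t with
  | TVar _ b m => s = Some b /\ n = m
  | TSVar m => s = None /\ n = m
  | TConst _ _ => False
  | TApp _ f ts => exists i, occT (ts i) s n
  | TIte _ _ gam t1 t2 => occF gam s n \/ occT t1 s n \/ occT t2 s n
  | TSpF phi => occF phi s n
  | TSpT _ t => occT t s n
  | TEmpty => False
  | TUnion A B => occT A s n \/ occT B s n
  | TInter A B => occT A s n \/ occT B s n
  | TCompl A => occT A s n
  end
with occF g (phi : formula g) (s : sort) (n : nat) : Prop :=
  match phi with
  | FEq _ _ t1 t2 => occT t1 s n \/ occT t2 s n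
  | FRel _ r ts => exists i, occT (ts i) s n
  | FRelI r ts => exists i, occT (ts i) s n
  | FMem t A => occT t s n \/ occT A s n
  | FAnd _ a b => occF a s n \/ occF b s n
  | FNot _ a => occF a s n
  | FIte _ gam a b => occF gam s n \/ occF a s n \/ occF b s n
  | FEx _ s' m gam a => (occF gam s n \/ occF a s n) /\ ~ (s = s' /\ n = m)
  end.

(* The definition rho_R(xbar) of an inductive relation R : its formal
   parameters xbar are the variables  x_i = (i, sort of the i-th argument),
   and rho_R has no other free variables. *)
Definition def_closed (r : Isym S) (rho : formula false) : Prop :=
  forall s n, occF rho s n ->
    exists i : 'I_(size (iargs r)), s = Some (nthS (iargs r) i) /\ n = i.

(* Inductive relations occur only under an even number of negations, or
   inside support expressions ([p] = current polarity, true = even).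
   Terms can contain formulas only inside support expressions or guards
   (guards contain no inductive relation), so terms impose no constraint. *)
Fixpoint polarity_ok (p : bool) g (phi : formula g) : Prop :=
  match phi with
  | FEq _ _ _ _ => True
  | FRel _ _ _ => True
  | FRelI _ _ => p = true
  | FMem _ _ => True
  | FAnd _ a b => polarity_ok p a /\ polarity_ok p b
  | FNot _ a => polarity_ok (~~ p) a
  | FIte _ _ a b => polarity_ok p a /\ polarity_ok p b
  | FEx _ _ _ _ a => polarity_ok p a
  end.

(* The part of a model that is fixed: universes, constants, functions,
   and ordinary relations. *)
Record structure := Structure {
  univ : bsort S -> Type;
  cI : forall c : Csym S, univ (csort c);
  fI : forall f : Fsym S,
        (forall i : 'I_(size (fargs f)), univ (nthS (fargs f) i)) -> univ (fres f);
  rI : forall r : Rsym S,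
        (forall i : 'I_(size (rargs r)), univ (nthS (rargs r) i)) -> Prop
}.

Definition carrier (U : bsort S -> Type) (s : sort) : Type :=
  match s with Some b => U b | None => U (fg S) -> Prop end.

Definition asg (U : bsort S -> Type) := forall s : sort, nat -> carrier U s.

Definition upd U (nu : asg U) (s : sort) (n : nat) (v : carrier U s) : asg U :=
  fun s' n' =>
    if n' == n then
      match s' =P s with
      | ReflectT e => eq_rect_r (carrier U) v e
      | ReflectF _ => nu s' n'
      end
    else nu s' n'.

Definition params_upd U (nu : asg U) (ss : seq (bsort S))
    (a : forall i : 'I_(size ss), U (nthS ss i)) : asg U :=
  fun s n =>
    match (insub n : option 'I_(size ss)) with
    | Some i =>
        match s =P Some (nthS ss i) with
        | ReflectT e => eq_rect_r (carrier U) (a i : carrier U (Some (nthS ss i))) e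
        | ReflectF _ => nu s n
        end
    | None => nu s n
    end.

Record model := Model {
  mbase : structure;
  suppF : formula false -> asg (univ mbase) -> univ mbase (fg S) -> Prop;
  suppT : forall s, term false s -> asg (univ mbase) -> univ mbase (fg S) -> Prop;
  indI : forall r : Isym S,
        (forall i : 'I_(size (iargs r)), univ mbase (nthS (iargs r) i)) -> Prop
}.

Section Eval.
Variable M : model.
Let U := univ (mbase M).

Fixpoint eval g s (t : term g s) (nu : asg U) : carrier U s :=
  match t in term _ s return carrier U s with
  | TVar _ b n => nu (Some b) n
  | TSVar n => nu None n
  | TConst _ c => @cI (mbase M) c
  | TApp _ f ts => @fI (mbase M) f (fun i => eval (ts i) nu)
  | TIte _ _ gam t1 t2 =>
      if excluded_middle_informative (sat gam nu) then eval t1 nu else eval t2 nu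
  | TSpF phi => @suppF M phi nu
  | TSpT _ t => @suppT M _ t nu
  | TEmpty => fun _ => False
  | TUnion A B => fun u => eval A nu u \/ eval B nu u
  | TInter A B => fun u => eval A nu u /\ eval B nu u
  | TCompl A => fun u => ~ eval A nu u
  end
with sat g (phi : formula g) (nu : asg U) : Prop :=
  match phi with
  | FEq _ _ t1 t2 => eval t1 nu = eval t2 nu
  | FRel _ r ts => @rI (mbase M) r (fun i => eval (ts i) nu)
  | FRelI r ts => @indI M r (fun i => eval (ts i) nu)
  | FMem t A => eval A nu (eval t nu)
  | FAnd _ a b => sat a nu /\ sat b nu
  | FNot _ a => ~ sat a nu
  | FIte _ gam a b => (sat gam nu /\ sat a nu) \/ (~ sat gam nu /\ sat b nu)
  | FEx _ s n gam a => exists v : carrier U s, sat gam (upd nu n v) /\ sat a (upd nu n v)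
  end.

(* {[[t]]} if t has the foreground sort, empty otherwise *)
Definition as_fg (b : bsort S) (v : U b) : U (fg S) -> Prop :=
  fun u => exists e : b = fg S, eq_rect b U v (fg S) e = u.

Variable rho : forall r : Isym S, formula false.

(* Right-hand sides of the support equations (one unfolding step). *)
Definition rhsT g s (t : term g s) (nu : asg U) : U (fg S) -> Prop :=
  match t with
  | TVar _ _ _ => fun _ => False
  | TSVar _ => fun _ => False
  | TConst _ _ => fun _ => False
  | TApp _ f ts => fun u =>
      (fmut f /\ exists i, as_fg (eval (ts i) nu) u)
      \/ exists i, @suppT M _ (relaxT (ts i)) nu u
  | TIte _ _ gam t1 t2 => fun u =>
      @suppF M (relaxF gam) nu u \/
      (if excluded_middle_informative (sat gam nu)
       then @suppT M _ (relaxT t1) nu u else @suppT M _ (relaxT t2) nu u)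
  | TSpF phi => @suppF M phi nu
  | TSpT _ t => @suppT M _ t nu
  | TEmpty => fun _ => False
  | TUnion A B => fun u => @suppT M _ A nu u \/ @suppT M _ B nu u
  | TInter A B => fun u => @suppT M _ A nu u \/ @suppT M _ B nu u
  | TCompl A => @suppT M _ A nu
  end.

Definition rhsF g (phi : formula g) (nu : asg U) : U (fg S) -> Prop :=
  match phi with
  | FEq _ _ t1 t2 => fun u => @suppT M _ (relaxT t1) nu u \/ @suppT M _ (relaxT t2) nu u
  | FRel _ r ts => fun u => exists i, @suppT M _ (relaxT (ts i)) nu u
  | FRelI r ts => fun u =>
      @suppF M (rho r) (params_upd nu (fun i => eval (ts i) nu)) u
      \/ exists i, @suppT M _ (ts i) nu u
  | FMem t A => fun u => @suppT M _ t nu u \/ @suppT M _ A nu u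
  | FAnd _ a b => fun u => @suppF M (relaxF a) nu u \/ @suppF M (relaxF b) nu u
  | FNot _ a => @suppF M (relaxF a) nu
  | FIte _ gam a b => fun u =>
      @suppF M (relaxF gam) nu u \/
      (if excluded_middle_informative (sat gam nu)
       then @suppF M (relaxF a) nu u else @suppF M (relaxF b) nu u)
  | FEx _ s n gam a => fun u =>
      (exists v : carrier U s, @suppF M (relaxF gam) (upd nu n v) u)
      \/ (exists v : carrier U s,
            sat gam (upd nu n v) /\ @suppF M (relaxF a) (upd nu n v) u)
  end.

Definition support_eqs : Prop :=
  (forall g (phi : formula g) nu u, @suppF M (relaxF phi) nu u <-> rhsF phi nu u) /\
  (forall g s (t : term g s) nu u, @suppT M _ (relaxT t) nu u <-> rhsT t nu u).

Definition inductive_eqs : Prop :=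
  forall (r : Isym S) (nu : asg U),
    sat (@FRelI r (fun i : 'I_(size (iargs r)) => @TVar false (nthS (iargs r) i) i)) nu
    <-> sat (rho r) nu.

End Eval.

Definition frame_model (rho : forall r : Isym S, formula false) (M : model) : Prop :=
  support_eqs M rho /\ inductive_eqs M rho /\
  (forall sF' sT' ind',
     (forall phi nu u, sF' phi nu u -> @suppF M phi nu u) ->
     (forall s t nu u, sT' s t nu u -> @suppT M _ t nu u) ->
     ((exists phi nu u, @suppF M phi nu u /\ ~ sF' phi nu u) \/
      (exists s t nu u, @suppT M _ t nu u /\ ~ sT' s t nu u)) ->
     ~ support_eqs (@Model (mbase M) sF' sT' ind') rho) /\
  (forall ind',
     (forall r a, ind' r a -> @indI M r a) ->
     (exists r a, @indI M r a /\ ~ ind' r a) ->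
     ~ inductive_eqs (@Model (mbase M) (@suppF M) (@suppT M) ind') rho).

End FL.

(* Main.v *)
Require Import Defs.
From mathcomp Require Import all_boot.
From Stdlib Require Import ClassicalDescription FunctionalExtensionality PropExtensionality Classical.

Set Implicit Arguments.
Unset Strict Implicit.
Unset Printing Implicit Defensive.


Scheme term_mind := Induction for term Sort Prop
  with formula_mind := Induction for formula Sort Prop.
Combined Scheme tf_mind from term_mind, formula_mind.

Lemma ite_iff (P Q : Prop) T (a b c d : T) :
  (P <-> Q) -> a = c -> b = d ->
  (if excluded_middle_informative P then a else b) =
  (if excluded_middle_informative Q then c else d).
Proof.
move=> PQ -> ->.
case: (excluded_middle_informative P) => p; case: (excluded_middle_informative Q) => q //.
- by case: q; apply/PQ.
- by case: p; apply/PQ.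
Qed.

Section Gen.
Variable S : signature.
Notation sort := (option (bsort S)).

Lemma relax_idem :
  (forall g s (t : term (S:=S) g s), relaxT (relaxT t) = relaxT t) /\
  (forall g (phi : formula S g), relaxF (relaxF phi) = relaxF phi).
Proof.
apply: tf_mind => //=; intros; try congruence.
all: try (f_equal; apply: functional_extensionality_dep => i; by []).
Qed.

Lemma occ_relax :
  (forall g s0 (t : term (S:=S) g s0) s n, occT (relaxT t) s n <-> occT t s n) /\
  (forall g (phi : formula S g) s n, occF (relaxF phi) s n <-> occF phi s n).
Proof.
apply: tf_mind => //=; intros; try tauto.
all: try (by split=> -[i Hi]; exists i; apply/H).
all: rewrite ?H ?H0 ?H1; tauto.
Qed.

Lemma relax_eval (M : model S) :
  (forall g s (t : term (S:=S) g s) nu, eval (M:=M) (relaxT t) nu = eval (M:=M) t nu) /\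
  (forall g (phi : formula S g) nu, sat (M:=M) (relaxF phi) nu <-> sat (M:=M) phi nu).
Proof.
apply: tf_mind => //=; intros; try tauto.
- have -> : (fun i => eval (M:=M) (relaxT (ts i)) nu) = (fun i => eval (ts i) nu)
    by apply: functional_extensionality_dep => i; apply: H.
  done.
- by rewrite H0 H1.
- by rewrite H H0.
- have -> : (fun i => eval (M:=M) (relaxT (ts i)) nu) = (fun i => eval (ts i) nu)
    by apply: functional_extensionality_dep => i; apply: H.
  done.
- rewrite H H0; tauto.
- rewrite H; tauto.
- rewrite H0 H1; tauto.
- by split=> -[v [h1 h2]]; exists v; split => //; apply/H0.
Qed.

End Gen.


Section Indep.
Variable S : signature.
Variable B : structure S.
Notation U := (univ B).
Notation mk sF sT ind := (@Model S B sF sT ind).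

Lemma indep sF1 sT1 i1 sF2 sT2 i2 :
  (forall g s (t : term (S:=S) g s),
     (g = true \/ s <> None \/ (sF1 = sF2 /\ sT1 = sT2)) ->
     forall nu, eval (M:=mk sF1 sT1 i1) t nu = eval (M:=mk sF2 sT2 i2) t nu) /\
  (forall g (phi : formula S g), g = true ->
     forall nu, sat (M:=mk sF1 sT1 i1) phi nu <-> sat (M:=mk sF2 sT2 i2) phi nu).
Proof.
apply: tf_mind.
- by [].
- by [].
- by [].
- move=> g f ts IH Hh nu /=.
  have -> : (fun i => eval (M:=mk sF1 sT1 i1) (ts i) nu) = (fun i => eval (M:=mk sF2 sT2 i2) (ts i) nu)
    by apply: functional_extensionality_dep => i; apply: IH; case: Hh => [->|]; [left|right; left].
  done.
- move=> g s gam IHg t1 IH1 t2 IH2 Hh nu /=.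
  by apply: ite_iff; [apply: IHg|apply: IH1|apply: IH2].
- move=> phi _ Hh nu /=.
  by case: Hh => [//|[/(_ erefl)//|[-> _]]].
- move=> s t _ Hh nu /=.
  by case: Hh => [//|[/(_ erefl)//|[_ ->]]].
- by [].
- by move=> A HA B0 HB Hh nu /=; rewrite (HA Hh nu) (HB Hh nu).
- by move=> A HA B0 HB Hh nu /=; rewrite (HA Hh nu) (HB Hh nu).
- by move=> A HA Hh nu /=; rewrite (HA Hh nu).
- by move=> g s t1 H1 t2 H2 Hg nu /=; rewrite (H1 (or_introl Hg)) (H2 (or_introl Hg)).
- move=> g r ts IH Hg nu /=.
  have -> : (fun i => eval (M:=mk sF1 sT1 i1) (ts i) nu) = (fun i => eval (M:=mk sF2 sT2 i2) (ts i) nu)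
    by apply: functional_extensionality_dep => i; apply: IH; left.
  done.
- by [].
- by [].
- by move=> g phi H1 psi H2 Hg nu /=; rewrite (H1 Hg) (H2 Hg).
- by move=> g phi H1 Hg nu /=; rewrite (H1 Hg).
- by move=> g gam H0 phi H1 psi H2 Hg nu /=; rewrite (H0 erefl) (H1 Hg) (H2 Hg).
- move=> g s n gam H0 phi H1 Hg nu /=.
  by split=> -[v [h1 h2]]; exists v; split; try (apply/H0 => //); try (apply/H1 => //).
Qed.


Lemma agree_upd (nu nu' : asg U) (P : option (bsort S) -> nat -> Prop) s' m (v : carrier U s') :
  (forall s n, P s n -> ~ (s = s' /\ n = m) -> nu s n = nu' s n) ->
  forall s n, P s n -> upd nu m v s n = upd nu' m v s n.
Proof.
move=> H s n Hp; rewrite /upd; case: ifP => [/eqP En|/eqP En].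
  case: (s =P s') => [Es|Es] //; apply: H => // -[E1 _]; exact: Es E1.
apply: H => // -[_ E2]; exact: En E2.
Qed.

Lemma params_agree (r : Isym S) (rho : formula S false) :
  def_closed r rho -> forall (nu nu' : asg U) (a : forall i : 'I_(size (iargs r)), U (nth (fg S) (iargs r) i)) s n, occF rho s n ->
  params_upd nu a s n = params_upd nu' a s n.
Proof.
move=> Hc nu nu' a s n /Hc [i [-> ->]].
rewrite /params_upd.
rewrite (_ : insub (nat_of_ord i) = Some i); last exact: valK.
by case: eqP.
Qed.

Lemma local sF sT ind
 (HF : forall phi nu nu' u, (forall s n, occF phi s n -> nu s n = nu' s n) -> sF phi nu u -> sF phi nu' u)
 (HT : forall s t nu nu' u, (forall s0 n, occT t s0 n -> nu s0 n = nu' s0 n) -> sT s t nu u -> sT s t nu' u) :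
 (forall g s (t : term (S:=S) g s) nu nu', (forall s0 n, occT t s0 n -> nu s0 n = nu' s0 n) ->
     eval (M:=mk sF sT ind) t nu = eval (M:=mk sF sT ind) t nu') /\
 (forall g (phi : formula S g) nu nu', (forall s0 n, occF phi s0 n -> nu s0 n = nu' s0 n) ->
     sat (M:=mk sF sT ind) phi nu <-> sat (M:=mk sF sT ind) phi nu').
Proof.
apply: tf_mind.
- move=> g b n nu nu' Ha /=; exact: (Ha _ _ (conj erefl erefl)).
- move=> n nu nu' Ha /=; exact: (Ha _ _ (conj erefl erefl)).
- by [].
- move=> g f ts IH nu nu' Ha /=.
  have -> : (fun i => eval (M:=mk sF sT ind) (ts i) nu) = (fun i => eval (M:=mk sF sT ind) (ts i) nu')
    by apply: functional_extensionality_dep => i; apply: IH => s0 n0 h; apply: Ha; exists i.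
  done.
- move=> g s gam IHg t1 IH1 t2 IH2 nu nu' Ha /=.
  apply: ite_iff; [apply: IHg|apply: IH1|apply: IH2] => s0 n0 h; apply: Ha => /=; tauto.
- move=> phi _ nu nu' Ha /=.
  apply: functional_extensionality => u; apply: propositional_extensionality.
  by split; apply: HF => s0 n0 h; [|symmetry]; apply: Ha.
- move=> s t _ nu nu' Ha /=.
  apply: functional_extensionality => u; apply: propositional_extensionality.
  by split; apply: HT => s0 n0 h; [|symmetry]; apply: Ha.
- by [].
- move=> A HA B0 HB nu nu' Ha /=.
  by rewrite (HA nu nu') ?(HB nu nu') // => s0 n0 h; apply: Ha => /=; tauto.
- move=> A HA B0 HB nu nu' Ha /=.
  by rewrite (HA nu nu') ?(HB nu nu') // => s0 n0 h; apply: Ha => /=; tauto.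
- move=> A HA nu nu' Ha /=.
  by rewrite (HA nu nu').
- move=> g s t1 H1 t2 H2 nu nu' Ha /=.
  by rewrite (H1 nu nu') ?(H2 nu nu') // => s0 n0 h; apply: Ha => /=; tauto.
- move=> g r ts IH nu nu' Ha /=.
  have -> : (fun i => eval (M:=mk sF sT ind) (ts i) nu) = (fun i => eval (M:=mk sF sT ind) (ts i) nu')
    by apply: functional_extensionality_dep => i; apply: IH => s0 n0 h; apply: Ha; exists i.
  done.
- move=> r ts IH nu nu' Ha /=.
  have -> : (fun i => eval (M:=mk sF sT ind) (ts i) nu) = (fun i => eval (M:=mk sF sT ind) (ts i) nu')
    by apply: functional_extensionality_dep => i; apply: IH => s0 n0 h; apply: Ha; exists i.
  done.
- move=> t Ht A HA nu nu' Ha /=.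
  by rewrite (Ht nu nu') ?(HA nu nu') // => s0 n0 h; apply: Ha => /=; tauto.
- move=> g phi H1 psi H2 nu nu' Ha /=.
  rewrite (H1 nu nu') ?(H2 nu nu') // => s0 n0 h; apply: Ha => /=; tauto.
- move=> g phi H1 nu nu' Ha /=.
  by rewrite (H1 nu nu').
- move=> g gam H0 phi H1 psi H2 nu nu' Ha /=.
  rewrite (H0 nu nu') ?(H1 nu nu') ?(H2 nu nu') // => s0 n0 h; apply: Ha => /=; tauto.
- move=> g s n gam H0 phi H1 nu nu' Ha /=.
  have E : forall (P : option (bsort S) -> nat -> Prop) (v : carrier U s),
     (forall s0 n0, P s0 n0 -> ~ (s0 = s /\ n0 = n) -> occF (FEx s n gam phi) s0 n0) ->
     forall s0 n0, P s0 n0 -> upd nu n v s0 n0 = upd nu' n v s0 n0.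
    move=> P v HP; apply: (@agree_upd nu nu' P s n v) => s0 n0 h hn; apply: Ha.
    exact: HP h hn.
  split=> -[v [h1 h2]]; exists v.
    split; [apply/(H0 (upd nu n v))|apply/(H1 (upd nu n v))] => //;
    apply: E => s0 n0 h hn /=; split; tauto.
  split; [apply/(H0 (upd nu' n v))|apply/(H1 (upd nu' n v))] => //;
    move=> s0 n0 h; symmetry; move: s0 n0 h; apply: E => s0 n0 h hn /=; split; tauto.
Qed.

Lemma guard_local sF sT i (gam : formula S true) nu nu' :
  (forall s n, occF gam s n -> nu s n = nu' s n) ->
  (sat (M:=mk sF sT i) gam nu <-> sat (M:=mk sF sT i) gam nu').
Proof.
move=> Ha.
have L := (@local (fun _ _ _ => False) (fun _ _ _ _ => False) i
   (fun _ _ _ _ _ h => h) (fun _ _ _ _ _ _ h => h)).2 _ gam nu nu' Ha.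
have E := (indep sF sT i (fun _ _ _ => False) (fun _ _ _ _ => False) i).2 _ gam erefl.
by rewrite !E.
Qed.

Lemma sterm_local sF sT i g b (t : term (S:=S) g (Some b)) nu nu' :
  (forall s n, occT t s n -> nu s n = nu' s n) ->
  eval (M:=mk sF sT i) t nu = eval (M:=mk sF sT i) t nu'.
Proof.
move=> Ha.
have L := (@local (fun _ _ _ => False) (fun _ _ _ _ => False) i
   (fun _ _ _ _ _ h => h) (fun _ _ _ _ _ _ h => h)).1 _ _ t nu nu' Ha.
have E := (indep sF sT i (fun _ _ _ => False) (fun _ _ _ _ => False) i).1 _ _ t
   (or_intror (or_introl (fun e : Some b = None => ltac:(discriminate e)))).
by rewrite !E.
Qed.
End Indep.


Section Main.
Variable S : signature.
Variable rho : forall r : Isym S, formula S false.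
Hypothesis rho_closed : forall r, def_closed r (rho r).
Hypothesis rho_pos : forall r, polarity_ok true (rho r).
Variable B : structure S.
Notation U := (univ B).
Notation mk sF sT ind := (@Model S B sF sT ind).

Definition SFt := formula S false -> asg U -> U (fg S) -> Prop.
Definition STt := forall s, term (S:=S) false s -> asg U -> U (fg S) -> Prop.
Definition INDt := forall r : Isym S, (forall i : 'I_(size (iargs r)), U (nth (fg S) (iargs r) i)) -> Prop.
Definition ind0 : INDt := fun _ _ => False.

Lemma rhs_mono (sF1 : SFt) (sT1 : STt) (i1 : INDt) (sF2 : SFt) (sT2 : STt) (i2 : INDt)
  (HF : forall phi nu u, sF1 phi nu u -> sF2 phi nu u)
  (HT : forall s t nu u, sT1 s t nu u -> sT2 s t nu u) :
  (forall g (phi : formula S g) nu u,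
     rhsF (M:=mk sF1 sT1 i1) rho phi nu u -> rhsF (M:=mk sF2 sT2 i2) rho phi nu u) /\
  (forall g s (t : term (S:=S) g s) nu u,
     rhsT (M:=mk sF1 sT1 i1) t nu u -> rhsT (M:=mk sF2 sT2 i2) t nu u).
Proof.
have EV : forall g b (t : term (S:=S) g (Some b)) nu,
    eval (M:=mk sF1 sT1 i1) t nu = eval (M:=mk sF2 sT2 i2) t nu.
  move=> g b t nu; apply: (indep sF1 sT1 i1 sF2 sT2 i2).1.
  by right; left.
have SG : forall (gam : formula S true) nu,
    sat (M:=mk sF1 sT1 i1) gam nu <-> sat (M:=mk sF2 sT2 i2) gam nu.
  by move=> gam nu; apply: (indep sF1 sT1 i1 sF2 sT2 i2).2.
split.
- move=> g phi nu u; case: phi => /=.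
  + by move=> *; firstorder.
  + by move=> *; firstorder.
  + move=> r ts.
    rewrite (_ : (fun i => eval (M:=mk sF1 sT1 i1) (ts i) nu) = (fun i => eval (M:=mk sF2 sT2 i2) (ts i) nu)).
      by firstorder.
    by apply: functional_extensionality_dep => i; apply: EV.
  + by move=> *; firstorder.
  + by move=> *; firstorder.
  + by move=> *; firstorder.
  + move=> g0 gam phi psi; have E := SG gam nu.
    case: (excluded_middle_informative _) => h1; case: (excluded_middle_informative _) => h2 /=; firstorder.
  + move=> g0 s n gam phi; have E := fun v => SG gam (upd nu n v); firstorder.
- move=> g s t nu u; case: t => /=.
  + by [].
  + by [].
  + by [].
  + move=> g0 f ts.
    have E i : eval (M:=mk sF1 sT1 i1) (ts i) nu = eval (M:=mk sF2 sT2 i2) (ts i) nu by apply: EV.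
    case=> [[hm [i hi]]|[i hi]]; [left; split=>//; exists i; rewrite -E // | right; exists i; apply: HT hi].
  + move=> g0 s0 gam t1 t2; have E := SG gam nu.
    case: (excluded_middle_informative _) => h1; case: (excluded_middle_informative _) => h2 /=; firstorder.
  + by move=> *; firstorder.
  + by move=> *; firstorder.
  + by [].
  + by move=> *; firstorder.
  + by move=> *; firstorder.
  + by move=> *; firstorder.
Qed.

Lemma rhs_relax (M : model S) :
 (forall g (phi : formula S g) nu u, rhsF (M:=M) rho (relaxF phi) nu u <-> rhsF (M:=M) rho phi nu u) /\
 (forall g s (t : term (S:=S) g s) nu u, rhsT (M:=M) (relaxT t) nu u <-> rhsT (M:=M) t nu u).
Proof.
have [IT IF] := relax_idem S.
have [ET EF] := relax_eval M.
split; [move=> g phi nu u; case: phi => /= | move=> g s t nu u; case: t => /=]; intros; rewrite ?IT ?IF //.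
- by split=> -[i h]; exists i; rewrite ?IT in h *.
- split => -[[hm [i h]]|[i h]].
  + by left; split=>//; exists i; rewrite ?ET in h *.
  + by right; exists i; rewrite ?IT in h *.
  + by left; split=>//; exists i; rewrite ?ET in h *.
  + by right; exists i; rewrite ?IT in h *.
Qed.

Definition closedS (sF : SFt) (sT : STt) : Prop :=
 (forall g (phi : formula S g) nu u, rhsF (M:=mk sF sT ind0) rho phi nu u -> sF (relaxF phi) nu u) /\
 (forall g s (t : term (S:=S) g s) nu u, rhsT (M:=mk sF sT ind0) t nu u -> sT s (relaxT t) nu u).
Definition LF : SFt := fun psi nu u => forall sF sT, closedS sF sT -> sF psi nu u.
Definition LT : STt := fun s t nu u => forall sF sT, closedS sF sT -> sT s t nu u.
Arguments LT : clear implicits.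
Arguments LF : clear implicits.

Lemma L_closed : closedS LF LT.
Proof.
split.
- move=> g phi nu u H sF sT C; apply: C.1.
  exact: ((@rhs_mono LF LT ind0 sF sT ind0 (fun _ _ _ h => h sF sT C) (fun _ _ _ _ h => h sF sT C)).1 _ _ _ _ H).
- move=> g s t nu u H sF sT C; apply: C.2.
  exact: ((@rhs_mono LF LT ind0 sF sT ind0 (fun _ _ _ h => h sF sT C) (fun _ _ _ _ h => h sF sT C)).2 _ _ _ _ _ H).
Qed.

Lemma L_le sF sT : closedS sF sT ->
  (forall psi nu u, LF psi nu u -> sF psi nu u) /\ (forall s t nu u, LT s t nu u -> sT s t nu u).
Proof. move=> C; split=> [psi nu u h|s t nu u h]; [exact: (h _ _ C)|exact: (h _ _ C)]. Qed.

Lemma eqs_closed sF sT ind : support_eqs (mk sF sT ind) rho -> closedS sF sT.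
Proof.
move=> [EF ET]; split.
- move=> g phi nu u H; apply/(EF g phi nu u).
  exact: ((@rhs_mono sF sT ind0 sF sT ind (fun _ _ _ h => h) (fun _ _ _ _ h => h)).1 _ _ _ _ H).
- move=> g s t nu u H; apply/(ET g s t nu u).
  exact: ((@rhs_mono sF sT ind0 sF sT ind (fun _ _ _ h => h) (fun _ _ _ _ h => h)).2 _ _ _ _ _ H).
Qed.

Lemma L_eqs ind : support_eqs (mk LF LT ind) rho.
Proof.
pose sF2 : SFt := fun psi nu u => LF psi nu u /\
   forall g (phi : formula S g), relaxF phi = psi -> rhsF (M:=mk LF LT ind0) rho phi nu u.
pose sT2 : STt := fun s t nu u => LT s t nu u /\
   forall g (t0 : term (S:=S) g s), relaxT t0 = t -> rhsT (M:=mk LF LT ind0) t0 nu u.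
have C2 : closedS sF2 sT2.
  have Mo := @rhs_mono sF2 sT2 ind0 LF LT ind0 (fun _ _ _ h => h.1) (fun _ _ _ _ h => h.1).
  have [RF RT] := rhs_relax (mk LF LT ind0).
  split.
  - move=> g phi nu u H; have H1 := Mo.1 _ _ _ _ H.
    split; first exact: L_closed.1 _ _ _ _ H1.
    move=> g2 phi2 E; apply/RF; rewrite E; apply/RF; exact: H1.
  - move=> g s t nu u H; have H1 := Mo.2 _ _ _ _ _ H.
    split; first exact: L_closed.2 _ _ _ _ _ H1.
    move=> g2 t2 E; apply/RT; rewrite E; apply/RT; exact: H1.
have [LeF LeT] := L_le C2.
split.
- move=> g phi nu u /=; split.
  + move=> h; have [_ h2] := LeF _ _ _ h; have := h2 _ phi erefl.
    exact: (@rhs_mono LF LT ind0 LF LT ind (fun _ _ _ h => h) (fun _ _ _ _ h => h)).1.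
  + move=> h; apply: L_closed.1.
    exact: ((@rhs_mono LF LT ind LF LT ind0 (fun _ _ _ h => h) (fun _ _ _ _ h => h)).1 _ _ _ _ h).
- move=> g s t nu u /=; split.
  + move=> h; have [_ h2] := LeT _ _ _ _ h; have := h2 _ t erefl.
    exact: (@rhs_mono LF LT ind0 LF LT ind (fun _ _ _ h => h) (fun _ _ _ _ h => h)).2.
  + move=> h; apply: L_closed.2.
    exact: ((@rhs_mono LF LT ind LF LT ind0 (fun _ _ _ h => h) (fun _ _ _ _ h => h)).2 _ _ _ _ _ h).
Qed.

Lemma rhs_local (sF1 : SFt) (sT1 : STt) (sF2 : SFt) (sT2 : STt) (i : INDt)
 (hF : forall psi nu nu' u, sF1 psi nu u -> (forall s n, occF psi s n -> nu s n = nu' s n) -> sF2 psi nu' u)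
 (hT : forall s t nu nu' u, sT1 s t nu u -> (forall s0 n, occT t s0 n -> nu s0 n = nu' s0 n) -> sT2 s t nu' u) :
 (forall g (phi : formula S g) nu nu' u, rhsF (M:=mk sF1 sT1 i) rho phi nu u ->
    (forall s n, occF (relaxF phi) s n -> nu s n = nu' s n) -> rhsF (M:=mk sF2 sT2 i) rho phi nu' u) /\
 (forall g s (t : term (S:=S) g s) nu nu' u, rhsT (M:=mk sF1 sT1 i) t nu u ->
    (forall s0 n, occT (relaxT t) s0 n -> nu s0 n = nu' s0 n) -> rhsT (M:=mk sF2 sT2 i) t nu' u).
Proof.
have [OT OF] := occ_relax S.
have SG : forall (gam : formula S true) nu nu', (forall s n, occF gam s n -> nu s n = nu' s n) ->
    (sat (M:=mk sF1 sT1 i) gam nu <-> sat (M:=mk sF2 sT2 i) gam nu').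
  move=> gam nu nu' Ha; rewrite ((indep sF1 sT1 i sF2 sT2 i).2 _ gam erefl nu).
  exact: guard_local.
have EV : forall g b (t : term (S:=S) g (Some b)) nu nu', (forall s n, occT t s n -> nu s n = nu' s n) ->
    eval (M:=mk sF1 sT1 i) t nu = eval (M:=mk sF2 sT2 i) t nu'.
  move=> g b t nu nu' Ha; rewrite ((indep sF1 sT1 i sF2 sT2 i).1 _ _ t (or_intror (or_introl (fun e : Some b = None => ltac:(discriminate e)))) nu).
  exact: (@sterm_local S B sF2 sT2 i g b t nu nu' Ha).
split.
- move=> g phi nu nu' u; case: phi => /=.
  + move=> g0 s t1 t2 H Ha; case: H => h; [left|right]; apply: hT h _ => s0 n0 o; apply: Ha; tauto.
  + move=> g0 r ts [j h] Ha; exists j; apply: hT h _ => s0 n0 o; apply: Ha; by exists j.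
  + move=> r ts H Ha.
    have Ea : (fun j => eval (M:=mk sF1 sT1 i) (ts j) nu) = (fun j => eval (M:=mk sF2 sT2 i) (ts j) nu').
      by apply: functional_extensionality_dep => j; apply: EV => s0 n0 o; apply: Ha; exists j.
    case: H => [h|[j h]].
      left; rewrite Ea in h; apply: hF h _ => s0 n0 o.
      have [j [-> ->]] := @rho_closed r _ _ o.
      rewrite /params_upd (_ : insub (nat_of_ord j) = Some j); last exact: valK.
      by case: eqP.
    by right; exists j; apply: hT h _ => s0 n0 o; apply: Ha; exists j.
  + move=> t A H Ha; case: H => h; [left|right]; apply: hT h _ => s0 n0 o; apply: Ha; tauto.
  + move=> g0 a b H Ha; case: H => h; [left|right]; apply: hF h _ => s0 n0 o; apply: Ha; tauto.
  + move=> g0 a h Ha; apply: hF h _ => s0 n0 o; apply: Ha; tauto.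
  + move=> g0 gam a b H Ha.
    have E := SG gam nu nu' (fun s0 n0 o => Ha s0 n0 (or_introl o)).
    case: H => [h|h].
      by left; apply: hF h _ => s0 n0 o; apply: Ha; left; apply/OF.
    right; move: h.
    case: (excluded_middle_informative _) => h1; case: (excluded_middle_informative _) => h2 /=;
      try (by exfalso; tauto); move=> h; apply: hF h _ => s0 n0 o; apply: Ha; tauto.
  + move=> g0 s m gam a H Ha.
    have E : forall (P : option (bsort S) -> nat -> Prop) (v : carrier U s),
       (forall s0 n0, P s0 n0 -> ~ (s0 = s /\ n0 = m) -> occF (relaxF (FEx s m gam a)) s0 n0) ->
       forall s0 n0, P s0 n0 -> upd nu m v s0 n0 = upd nu' m v s0 n0.
      move=> P v HP; apply: (@agree_upd _ _ nu nu' P s m v) => s0 n0 h hn; apply: Ha.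
      exact: HP h hn.
    case: H => [[v h]|[v [h1 h2]]].
      by left; exists v; apply: hF h _; apply: E => s0 n0 o hn /=; split => //; left; apply/OF.
    right; exists v; split.
      by apply/(SG gam (upd nu m v)) => //; apply: E => s0 n0 o hn /=; split => //; left.
    by apply: hF h2 _; apply: E => s0 n0 o hn /=; split => //; right.
- move=> g s t nu nu' u; case: t => /=.
  + by [].
  + by [].
  + by [].
  + move=> g0 f ts H Ha.
    have Ee j : eval (M:=mk sF1 sT1 i) (ts j) nu = eval (M:=mk sF2 sT2 i) (ts j) nu'.
      by apply: EV => s0 n0 o; apply: Ha; exists j; apply/OT.
    case: H => [[hm [j h]]|[j h]].
      by left; split => //; exists j; rewrite -Ee.
    by right; exists j; apply: hT h _ => s0 n0 o; apply: Ha; exists j.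
  + move=> g0 s0 gam t1 t2 H Ha.
    have E := SG gam nu nu' (fun s1 n0 o => Ha s1 n0 (or_introl o)).
    case: H => [h|h].
      by left; apply: hF h _ => s1 n0 o; apply: Ha; left; apply/OF.
    right; move: h.
    case: (excluded_middle_informative _) => h1; case: (excluded_middle_informative _) => h2 /=;
      try (by exfalso; tauto); move=> h; apply: hT h _ => s1 n0 o; apply: Ha; tauto.
  + move=> phi h Ha; apply: hF h _ => s1 n0 o; apply: Ha; tauto.
  + move=> s0 t h Ha; apply: hT h _ => s1 n0 o; apply: Ha; tauto.
  + by [].
  + move=> A B0 H Ha; case: H => h; [left|right]; apply: hT h _ => s1 n0 o; apply: Ha; tauto.
  + move=> A B0 H Ha; case: H => h; [left|right]; apply: hT h _ => s1 n0 o; apply: Ha; tauto.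
  + move=> A h Ha; apply: hT h _ => s1 n0 o; apply: Ha; tauto.
Qed.

Lemma L_local :
  (forall psi nu nu' u, LF psi nu u -> (forall s n, occF psi s n -> nu s n = nu' s n) -> LF psi nu' u) /\
  (forall s t nu nu' u, LT s t nu u -> (forall s0 n, occT t s0 n -> nu s0 n = nu' s0 n) -> LT s t nu' u).
Proof.
pose sF2 : SFt := fun psi nu u => LF psi nu u /\
   forall nu', (forall s n, occF psi s n -> nu s n = nu' s n) -> LF psi nu' u.
pose sT2 : STt := fun s t nu u => LT s t nu u /\
   forall nu', (forall s0 n, occT t s0 n -> nu s0 n = nu' s0 n) -> LT s t nu' u.
have Mo := @rhs_mono sF2 sT2 ind0 LF LT ind0 (fun _ _ _ h => h.1) (fun _ _ _ _ h => h.1).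
have Lo := @rhs_local sF2 sT2 LF LT ind0 (fun _ _ nu' _ h a => h.2 nu' a) (fun _ _ _ nu' _ h a => h.2 nu' a).
have C2 : closedS sF2 sT2.
  split.
  - move=> g phi nu u H; split; first exact: L_closed.1 _ _ _ _ (Mo.1 _ _ _ _ H).
    by move=> nu' Ha; apply: L_closed.1; apply: (Lo.1 _ _ nu nu' u H Ha).
  - move=> g s t nu u H; split; first exact: L_closed.2 _ _ _ _ _ (Mo.2 _ _ _ _ _ H).
    by move=> nu' Ha; apply: L_closed.2; apply: (Lo.2 _ _ _ nu nu' u H Ha).
have [LeF LeT] := L_le C2.
split.
- by move=> psi nu nu' u h Ha; exact: (LeF _ _ _ h).2 nu' Ha.
- by move=> s t nu nu' u h Ha; exact: (LeT _ _ _ _ h).2 nu' Ha.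
Qed.

Lemma sat_mono (sF : SFt) (sT : STt) (i1 i2 : INDt) (Hi : forall r a, i1 r a -> i2 r a) :
 forall g (phi : formula S g) p, polarity_ok p phi -> forall nu,
   if p then (sat (M:=mk sF sT i1) phi nu -> sat (M:=mk sF sT i2) phi nu)
   else (sat (M:=mk sF sT i2) phi nu -> sat (M:=mk sF sT i1) phi nu).
Proof.
have EV : forall g s (t : term (S:=S) g s) nu, eval (M:=mk sF sT i1) t nu = eval (M:=mk sF sT i2) t nu
  := fun g s t nu => ((indep sF sT i1 sF sT i2).1 g s t (or_intror (or_intror (conj erefl erefl))) nu).
have SG : forall (gam : formula S true) nu, sat (M:=mk sF sT i1) gam nu <-> sat (M:=mk sF sT i2) gam nu
  := fun gam nu => (indep sF sT i1 sF sT i2).2 _ gam erefl nu.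
apply: formula_ind => /=.
- by move=> g s t1 t2 p _ nu; destruct p; rewrite ?EV.
- move=> g r ts p _ nu.
  have -> : (fun i => eval (M:=mk sF sT i1) (ts i) nu) = (fun i => eval (M:=mk sF sT i2) (ts i) nu)
    by apply: functional_extensionality_dep => i.
  by case: p.
- move=> r ts p -> nu.
  have -> : (fun i => eval (M:=mk sF sT i1) (ts i) nu) = (fun i => eval (M:=mk sF sT i2) (ts i) nu)
    by apply: functional_extensionality_dep => i.
  exact: Hi.
- by move=> t A p _ nu; destruct p; rewrite ?EV.
- move=> g a IHa b IHb p [Ha Hb] nu.
  have := IHa p Ha nu; have := IHb p Hb nu; destruct p; tauto.
- move=> g a IHa p Ha nu.
  have := IHa (~~ p) Ha nu; destruct p => /=; tauto.
- move=> g gam _ a IHa b IHb p [Ha Hb] nu.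
  have := IHa p Ha nu; have := IHb p Hb nu; have := SG gam nu; destruct p; tauto.
- move=> g s n gam _ a IHa p Ha nu.
  case: p Ha => Ha [v [h1 h2]]; exists v; split.
  + exact/SG.
  + exact: (IHa true Ha).
  + exact/SG.
  + exact: (IHa false Ha).
Qed.

Definition closedI (ind : INDt) := forall r (nu : asg U), sat (M:=mk LF LT ind) (rho r) nu ->
  ind r (fun i => nu (Some (nth (fg S) (iargs r) i)) (nat_of_ord i)).
Definition LI : INDt := fun r a => forall ind, closedI ind -> ind r a.
Arguments LI : clear implicits.

Lemma LI_closed : closedI LI.
Proof.
move=> r nu H ind C; apply: (C).
exact: (@sat_mono LF LT LI ind (fun r a h => h ind C) _ _ true (rho_pos r) nu H).
Qed.

Lemma L_sat_local ind (phi : formula S false) nu nu' :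
  (forall s n, occF phi s n -> nu s n = nu' s n) ->
  (sat (M:=mk LF LT ind) phi nu <-> sat (M:=mk LF LT ind) phi nu').
Proof.
move=> Ha.
exact: ((@local S B LF LT ind (fun phi nu nu' u a h => L_local.1 phi nu nu' u h a)
   (fun s t nu nu' u a h => L_local.2 s t nu nu' u h a)).2 _ phi nu nu' Ha).
Qed.

Lemma LI_eqs : inductive_eqs (mk LF LT LI) rho.
Proof.
pose ind2 : INDt := fun r a => LI r a /\ forall nu : asg U,
   (forall i : 'I_(size (iargs r)), nu (Some (nth (fg S) (iargs r) i)) (nat_of_ord i) = a i) -> sat (M:=mk LF LT LI) (rho r) nu.
have C2 : closedI ind2.
  move=> r nu H.
  have H1 : sat (M:=mk LF LT LI) (rho r) nu :=
    @sat_mono LF LT ind2 LI (fun _ _ h => h.1) _ _ true (rho_pos r) nu H.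
  split; first exact: LI_closed H1.
  move=> nu' E; apply: (proj1 (@L_sat_local LI (rho r) nu nu' _)) => // s n o.
  have [j [-> ->]] := @rho_closed r _ _ o.
  by rewrite E.
move=> r nu /=; split.
- move=> h; have [_ h2] := h ind2 C2; exact: h2 nu (fun i => erefl).
- move=> h; exact: LI_closed h.
Qed.

Lemma L_frame : frame_model rho (mk LF LT LI).
Proof.
split; first exact: L_eqs.
split; first exact: LI_eqs.
split.
- move=> sF' sT' ind' HF HT [[phi [nu [u [h hn]]]]|[s [t [nu [u [h hn]]]]]] E;
  have C := eqs_closed E; have [LeF LeT] := L_le C.
  + exact: hn (LeF _ _ _ h).
  + exact: hn (LeT _ _ _ _ h).
- move=> ind' Hi [r [a [h hn]]] E.
  have C : closedI ind' := fun r nu h => (E r nu).2 h.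
  exact: hn (h ind' C).
Qed.

Lemma uniq_fm (sF : SFt) (sT : STt) (ind : INDt) :
  frame_model rho (mk sF sT ind) -> sF = LF /\ sT = LT /\ ind = LI.
Proof.
move=> [Hse [Hie [H1 H2]]].
have C := eqs_closed Hse; have [LeF LeT] := L_le C.
have GF : forall psi nu u, sF psi nu u -> LF psi nu u.
  move=> psi nu u h; apply: NNPP => hn.
  apply: (H1 LF LT ind0 LeF LeT _ (L_eqs ind0)); left; exists psi, nu, u; exact: (conj h hn).
have GT : forall s t nu u, sT s t nu u -> LT s t nu u.
  move=> s t nu u h; apply: NNPP => hn.
  apply: (H1 LF LT ind0 LeF LeT _ (L_eqs ind0)); right; exists s, t, nu, u; exact: (conj h hn).
have EF : sF = LF.
  apply: functional_extensionality => psi; apply: functional_extensionality => nu;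
  apply: functional_extensionality => u; apply: propositional_extensionality; split; auto.
have ET : sT = LT.
  apply: functional_extensionality_dep => s; apply: functional_extensionality => t;
  apply: functional_extensionality => nu;
  apply: functional_extensionality => u; apply: propositional_extensionality; split; auto.
subst sF sT; split; first by []; split; first by [].
have CI : closedI ind := fun r nu h => (Hie r nu).2 h.
have GI : forall r a, ind r a -> LI r a.
  move=> r a h; apply: NNPP => hn.
  apply: (H2 LI (fun r a h => h ind CI) _ LI_eqs); exists r, a; exact: (conj h hn).
apply: functional_extensionality_dep => r; apply: functional_extensionality => a.
apply: propositional_extensionality; split; [exact: GI | exact: (fun h => h ind CI)].
Qed.
End Main.


Theorem proposition1 (S : signature) (rho : forall r : Isym S, formula S false)
  (rho_closed : forall r, def_closed r (rho r))
  (rho_pos : forall r, polarity_ok true (rho r))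
  (M : model S) :
  exists! M' : model S, mbase M' = mbase M /\ frame_model rho M'.
Proof.
exists (@Model S (mbase M) (@LF S rho (mbase M)) (@LT S rho (mbase M)) (@LI S rho (mbase M))).
split; first by split; [| exact: (L_frame rho_closed rho_pos (mbase M))].
move=> [b sF sT ind] /= [Hb Hfm]; subst b.
by have [-> [-> ->]] := uniq_fm rho_closed rho_pos Hfm.
Qed.
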